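(* Let $\mathcal{C}=\{C_1,\ldots,C_m\}$ be a set of node-disjoint chains and let $T$ be a time function for $\mathcal{C}$. Then for every graph $G\in\mathcal{G}^{\mathcal{C},T}$, the set of sources of $\mathcal{C}$ is a zero forcing set of $G$.
   Context: Graphs are directed, self-loops allowed; $E(G)\subseteq V(G)\times V(G)$. A chain is a directed path graph; its start node (no in-neighbor) is its source and its end node (no out-neighbor) its sink; for a node $v$ of a chain that is not its sink, $v+1$ denotes its out-neighbor in the chain. Let $\mathcal{C}=\{C_1,\ldots,C_m\}$ be node-disjoint chains, $C_i$ with $n_i$ nodes, $V=\bigcup_{i=1}^m V(C_i)$, $n=\sum_i n_i$, $\gamma=n-m+1$; the sources of $\mathcal{C}$ are the sources of the $C_i$. A time function is a map $T:V\to\{1,\ldots,\gamma\}$ such that (1) $T(v)=1$ for every source $v$; (2) $T(u)\neq T(v)$ for any two distinct nodes $u,v$ neither of which is a source; (3) $T(v)<T(v+1)$ for every $v$ that is not a sink of its chain. Define $T_{\max}(v)=\gamma$ if $v$ is a sink of some $C_i$, and $T_{\max}(v)=T(v+1)-1$ otherwise. The class $\mathcal{G}^{\mathcal{C},T}$ of $(\mathcal{C},T)$-constructed graphs consists of all graphs $G$ with $V(G)=V$, $\bigcup_i E(C_i)\subseteq E(G)$, and such that for all $u,v\in V$ with $(u,v)\notin\bigcup_i E(C_i)$: if $T_{\max}(u)<T(v)$ then $(u,v)\notin E(G)$. Zero forcing: nodes of $G$ are colored black or white; color-change rule: if a black node $v$ has exactly one white out-neighbor $u$, then $u$ is turned black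 ($v$ forces $u$). Starting from an initial black set $S$ and applying the rule repeatedly until no change is possible yields the derived set $\mathcal{D}(S)$; $S$ is a zero forcing set (ZFS) of $G$ if $\mathcal{D}(S)=V(G)$. *)

(* Defs.v *)
From mathcomp Require Import all_boot.
Set Implicit Arguments. Unset Strict Implicit. Unset Printing Implicit Defensive.

Section ZF.
Variable V : finType.

(* A family of chains C = [:: C_1; ...; C_m]; each chain is listed from its
   source to its sink. *)

Definition chain_family (C : seq (seq V)) : Prop :=
  [/\ all (fun c => c != [::]) C, uniq (flatten C) & forall v : V, v \in flatten C].

Definition chain_edge (C : seq (seq V)) (u v : V) : bool :=
  has (fun c => [&& u \in c, (index u c).+1 < size c & v == nth u c (index u c).+1]) C.

Definition is_source (C : seq (seq V)) (v : V) : bool :=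
  has (fun c => (v \in c) && (index v c == 0)) C.

Definition is_sink (C : seq (seq V)) (v : V) : bool :=
  has (fun c => (v \in c) && ((index v c).+1 == size c)) C.

Definition sources (C : seq (seq V)) : {set V} := [set v | is_source C v].

Definition gamma (C : seq (seq V)) : nat := #|V| - size C + 1.

Definition chain_succ (C : seq (seq V)) (v : V) : option V :=
  [pick w | chain_edge C v w].

Definition time_function (C : seq (seq V)) (T : V -> nat) : Prop :=
  [/\ forall v, 1 <= T v <= gamma C,
      forall v, is_source C v -> T v = 1,
      forall u v, u != v -> ~~ is_source C u -> ~~ is_source C v -> T u != T v
    & forall u v, chain_edge C u v -> T u < T v].

Definition Tmax (C : seq (seq V)) (T : V -> nat) (v : V) : nat :=
  if is_sink C v then gamma C
  else match chain_succ C v with Some w => T w - 1 | None => gamma C end.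

(* G (given by its edge relation e on V, directed, loops allowed) is
   (C,T)-constructed *)
Definition constructed (C : seq (seq V)) (T : V -> nat) (e : rel V) : Prop :=
  (forall u v, chain_edge C u v -> e u v) /\
  (forall u v, ~~ chain_edge C u v -> Tmax C T u < T v -> ~~ e u v).

Definition forces (e : rel V) (B : {set V}) (v u : V) : bool :=
  [&& v \in B, u \notin B & [forall w, (e v w && (w \notin B)) == (w == u)]].

Inductive zf_reach (e : rel V) : {set V} -> {set V} -> Prop :=
| zf_refl B : zf_reach e B B
| zf_step B D v u : forces e B v u -> zf_reach e (u |: B) D -> zf_reach e B D.

Definition derived_set (e : rel V) (S D : {set V}) : Prop :=
  zf_reach e S D /\ forall v u, ~~ forces e D v u.

Definition zero_forcing_set (e : rel V) (S : {set V}) : Prop :=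
  derived_set e S [set: V].

End ZF.

(* Main.v *)
Require Import Defs.
From mathcomp Require Import all_boot.
From mathcomp Require Import zify.
Set Implicit Arguments. Unset Strict Implicit. Unset Printing Implicit Defensive.

Section Aux.
Variable V : finType.
Implicit Types (C : seq (seq V)).

Lemma chain_same C c1 c2 x : uniq (flatten C) -> c1 \in C -> c2 \in C ->
  x \in c1 -> x \in c2 -> c1 = c2.
Proof.
elim: C => [//|c C IH] /=; rewrite cat_uniq => /and3P [_ dis uC].
rewrite !inE => /orP[/eqP->|h1] /orP[/eqP->|h2] x1 x2 //.
- case/negP: dis; apply/hasP; exists x => //; apply/flattenP; by exists c2.
- case/negP: dis; apply/hasP; exists x => //; apply/flattenP; by exists c1.
- exact: IH.
Qed.

Lemma succ_uniq C u w1 w2 : uniq (flatten C) ->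
  chain_edge C u w1 -> chain_edge C u w2 -> w1 = w2.
Proof.
move=> uC /hasP[c1 c1C /and3P[u1 _ /eqP->]] /hasP[c2 c2C /and3P[u2 _ /eqP->]].
by rewrite (chain_same uC c1C c2C u1 u2).
Qed.

Lemma edge_not_sink C u v : uniq (flatten C) -> chain_edge C u v -> ~~ is_sink C u.
Proof.
move=> uC /hasP[c1 c1C /and3P[u1 lt1 _]]; apply/hasPn => c2 c2C.
apply/negP => /andP[u2 /eqP eq2].
move: lt1; rewrite (chain_same uC c1C c2C u1 u2) eq2 ltnn //.
Qed.

Lemma edge_succ C u v : uniq (flatten C) -> chain_edge C u v -> chain_succ C u = Some v.
Proof.
move=> uC h; rewrite /chain_succ; case: pickP => [w hw|/(_ v)]; last by rewrite h.
by rewrite (succ_uniq uC hw h).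
Qed.

Lemma pred_exists C v : chain_family C -> ~~ is_source C v -> exists u, chain_edge C u v.
Proof.
case=> _ uC allin ns.
have /flattenP[c cC vc] := allin v.
have uc : uniq c.
  move: uC; elim: C cC {ns allin} => [//|c' C IH] /=; rewrite cat_uniq.
  rewrite inE => /orP[/eqP->|h] /and3P[u1 _ u2] //; exact: IH.
have i0 : index v c != 0.
  apply/negP => /eqP i0; case/negP: ns; apply/hasP; exists c => //; by rewrite vc i0.
have ilt : index v c < size c by rewrite index_mem.
set u := nth v c (index v c).-1.
have ilt' : (index v c).-1 < size c by lia.
have iu : index u c = (index v c).-1 by rewrite /u index_uniq.
exists u; apply/hasP; exists c => //.
rewrite mem_nth //= iu prednK ?lt0n // ilt /=.
by rewrite (set_nth_default v) // nth_index.
Qed.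

End Aux.

Theorem theorem2 (V : finType) (C : seq (seq V)) (T : V -> nat) (e : rel V) :
  chain_family C -> time_function C T -> constructed C T e ->
  zero_forcing_set e (sources C).
Proof.
move=> hC hT [e1 e2].
have uC : uniq (flatten C) by case: hC.
case: hT => Tb Ts Tinj Tinc.
have ns2 : forall w, ~~ is_source C w -> 2 <= T w.
  move=> w /(pred_exists hC)[u /Tinc]; have := Tb u; lia.
have src : sources C = [set w | T w < 2].
  apply/setP => w; rewrite !inE; case: (boolP (is_source C w)) => h.
    by rewrite Ts.
  have := ns2 w h; lia.
have main : forall k t, 2 <= t -> gamma C + 1 <= t + k ->
    zf_reach e [set w | T w < t] [set: V].
  elim=> [|k IH] t t2 tk.
    have -> : [set w | T w < t] = [set: V].
      apply/setP => w; rewrite !inE; have := Tb w; lia.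
    exact: zf_refl.
  case: (pickP (fun v => T v == t)) => [v /eqP Tv|none].
  - have nsv : ~~ is_source C v by apply/negP => /Ts; lia.
    have [u uv] := pred_exists hC nsv.
    have Tm : Tmax C T u = T v - 1.
      by rewrite /Tmax (negbTE (edge_not_sink uC uv)) (edge_succ uC uv).
    apply: (@zf_step _ _ _ _ u v).
      apply/and3P; split; rewrite ?inE.
      + by have := Tinc _ _ uv; lia.
      + lia.
      + apply/forallP => w; rewrite inE.
        case: (eqVneq w v) => [->|wv]; first by rewrite e1 // Tv ltnn.
        apply/eqP; apply/negbTE; apply/negP => /andP[ew].
        case: (boolP (chain_edge C u w)) => [uw|nuw].
          by move: wv; rewrite (succ_uniq uC uw uv) eqxx.
        rewrite -leqNgt => tw.
        by move: ew; have -> // := negbTE (e2 u w nuw _); lia.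
    have -> : v |: [set w | T w < t] = [set w | T w < t.+1].
      apply/setP => w; rewrite !inE ltnS.
      case: (eqVneq w v) => [->|wv]; first by rewrite Tv leqnn.
      rewrite /= [T w <= t]leq_eqVlt; case: (eqVneq (T w) t) => [Tw|] //=.
      have nsw : ~~ is_source C w by apply/negP => /Ts; lia.
      by have := Tinj _ _ wv nsw nsv; rewrite Tv Tw ?eqxx.
    apply: (IH t.+1); lia.
  - have -> : [set w | T w < t] = [set w | T w < t.+1].
      apply/setP => w; rewrite !inE ltnS [T w <= t]leq_eqVlt.
      by have := none w; case: (T w == t).
    apply: (IH t.+1); lia.
split.
  by rewrite src; apply: (main (gamma C) 2) => //; rewrite addnC.
by move=> v u; rewrite /forces !in_setT /=.
Qed.
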